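(* Let $L$ be an $r\times s$ $\boldsymbol\rho$-latin rectangle with $r,s\le n$ and $n>\min\{r,s\}$. Let $\Gamma$ be the simple bipartite graph with parts $R\cup C$ and $[k]$, where $R=\{x_1,\dots,x_r\}$ represents the rows and $C=\{y_1,\dots,y_s\}$ represents the columns of $L$. Here $x_i$ is adjacent to $\ell$ iff symbol $\ell$ does not occur in row $i$ of $L$, and $y_j$ is adjacent to $\ell$ iff $\ell$ does not occur in column $j$ of $L$. Then $L$ can be completed to an $n\times n$ $\boldsymbol\rho$-latin square if and only if $\Gamma$ has a subgraph $\Theta$ such that all of the following hold: - $\deg_\Theta(x_i)=n-s$ for all $i\in[r]$; - $\deg_\Theta(y_j)=n-r$ for all $j\in[s]$; - $\deg_\Theta(\ell)\le\rho_\ell-e_\ell$ for all $\ell\in[k]$; - for every $\ell\in[k]$, the number of edges of $\Theta$ between $\ell$ and $R$ is at least $\rho_\ell-e_\ell-n+r$; - for every $\ell\in[k]$, the number of edges of $\Theta$ between $\ell$ and $C$ is at least $\rho_\ell-e_\ell-n+s$.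
   Context: Let $n,k$ be positive integers. Let $\boldsymbol\rho=(\rho_1,\dots,\rho_k)$ be integers with $1\le\rho_\ell\le n\le k$ and $\sum_\ell\rho_\ell=n^2$. A $\boldsymbol\rho$-latin square of order $n$ is an $n\times n$ array with entries in $[k]$, each symbol at most once per row and per column, and symbol $\ell$ occurring exactly $\rho_\ell$ times. An $r\times s$ $\boldsymbol\rho$-latin rectangle is an $r\times s$ array with entries in $[k]$, each symbol at most once per row and per column, and symbol $\ell$ occurring at most $\rho_\ell$ times. Completing it means finding a $\boldsymbol\rho$-latin square of order $n$ whose top-left $r\times s$ subarray is $L$. $e_\ell$ is the number of occurrences of $\ell$ in $L$. *)

(* Defs.v *)
From mathcomp Require Import all_boot all_order all_algebra.
Set Implicit Arguments. Unset Strict Implicit. Unset Printing Implicit Defensive.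

(* Symbols [k] are represented by 'I_k (symbol l+1 of the paper is ordinal l).
   Arrays are matrices with entries in 'I_k. *)

Definition occ (k r s : nat) (A : 'M['I_k]_(r, s)) (l : 'I_k) : nat :=
  #|[set p : 'I_r * 'I_s | A p.1 p.2 == l]|.

Definition latin_array (k r s : nat) (A : 'M['I_k]_(r, s)) : Prop :=
  (forall i : 'I_r, injective (fun j : 'I_s => A i j)) /\
  (forall j : 'I_s, injective (fun i : 'I_r => A i j)).

Definition rho_latin_rectangle (k r s : nat) (rho : 'I_k -> nat)
    (A : 'M['I_k]_(r, s)) : Prop :=
  latin_array A /\ forall l : 'I_k, occ A l <= rho l.

Definition rho_latin_square (k n : nat) (rho : 'I_k -> nat)
    (A : 'M['I_k]_n) : Prop :=
  latin_array A /\ forall l : 'I_k, occ A l = rho l.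

Definition completable (k n r s : nat) (rho : 'I_k -> nat)
    (hr : r <= n) (hs : s <= n) (L : 'M['I_k]_(r, s)) : Prop :=
  exists M : 'M['I_k]_n, rho_latin_square rho M /\
    forall (i : 'I_r) (j : 'I_s), M (widen_ord hr i) (widen_ord hs j) = L i j.

Definition GammaR (k r s : nat) (L : 'M['I_k]_(r, s)) (i : 'I_r) (l : 'I_k) : bool :=
  [forall j : 'I_s, L i j != l].
Definition GammaC (k r s : nat) (L : 'M['I_k]_(r, s)) (j : 'I_s) (l : 'I_k) : bool :=
  [forall i : 'I_r, L i j != l].

(* A subgraph Theta of Gamma, given by its edge set split into the edges
   between R and [k] (ThR) and between C and [k] (ThC). *)
Definition subgraph_of_Gamma (k r s : nat) (L : 'M['I_k]_(r, s))
    (ThR : {set 'I_r * 'I_k}) (ThC : {set 'I_s * 'I_k}) : Prop :=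
  (forall i l, (i, l) \in ThR -> GammaR L i l) /\
  (forall j l, (j, l) \in ThC -> GammaC L j l).

Definition degR (r k : nat) (ThR : {set 'I_r * 'I_k}) (i : 'I_r) : nat :=
  #|[set l : 'I_k | (i, l) \in ThR]|.
Definition degC (s k : nat) (ThC : {set 'I_s * 'I_k}) (j : 'I_s) : nat :=
  #|[set l : 'I_k | (j, l) \in ThC]|.
Definition edgesR (r k : nat) (ThR : {set 'I_r * 'I_k}) (l : 'I_k) : nat :=
  #|[set i : 'I_r | (i, l) \in ThR]|.
Definition edgesC (s k : nat) (ThC : {set 'I_s * 'I_k}) (l : 'I_k) : nat :=
  #|[set j : 'I_s | (j, l) \in ThC]|.

(* Main.v *)
Require Import Defs.
From mathcomp Require Import all_boot all_order all_algebra.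
From mathcomp Require Import zify.
Import Order.TTheory GRing.Theory Num.Theory.

Module Aux.
Set Implicit Arguments. Unset Strict Implicit. Unset Printing Implicit Defensive.

Section Hall.
Variables (X Y : finType).

Definition NB (adj : X -> Y -> bool) (S : {set X}) : {set Y} :=
  [set y | [exists x in S, adj x y]].

Lemma inNB (adj : X -> Y -> bool) (S : {set X}) y :
  (y \in NB adj S) = [exists x in S, adj x y].
Proof. by rewrite inE. Qed.

Lemma NB_sub (adj : X -> Y -> bool) (S : {set X}) x y : x \in S -> adj x y -> y \in NB adj S.
Proof. by move=> xS axy; rewrite inE; apply/existsP; exists x; rewrite xS. Qed.

Lemma hall (y0 : Y) (A : {set X}) (adj : X -> Y -> bool) :
  (forall S : {set X}, S \subset A -> #|S| <= #|NB adj S|) ->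
  exists f : X -> Y, {in A &, injective f} /\ forall x, x \in A -> adj x (f x).
Proof.
move: {2}#|A| (leqnn #|A|) => N; elim: N A adj => [|N IH] A adj.
  rewrite leqn0 cards_eq0 => /eqP -> _.
  by exists (fun _ => y0); split=> [x|x]; rewrite inE.
move=> szA hallA.
case: (boolP [exists S : {set X}, [&& S \subset A, S != set0, S != A & #|NB adj S| <= #|S|]]).
  case/existsP=> S /and4P [SA Sn0 SnA tight].
  have ltS : #|S| < #|A| by apply: proper_card; rewrite properEneq SnA.
  have [fS [injS adjS]] : exists f : X -> Y, {in S &, injective f} /\ forall x, x \in S -> adj x (f x).
    apply: IH; first by rewrite -ltnS (leq_trans ltS).
    by move=> T TS; apply: hallA; apply: subset_trans SA.
  pose adj' x y := adj x y && (y \notin NB adj S).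
  have [fT [injT adjT]] : exists f : X -> Y, {in A :\: S &, injective f} /\
      forall x, x \in A :\: S -> adj' x (f x).
    apply: IH.
      have : #|A :\: S| < #|A|.
        rewrite cardsD (setIidPr SA); move: Sn0; rewrite -card_gt0 => h.
        by move: (subset_leq_card SA); lia.
      by lia.
    move=> T TAS.
    have eqN : NB adj' T = NB adj (T :|: S) :\: NB adj S.
      apply/setP=> y; rewrite in_setD (inNB adj' T) (inNB adj (T :|: S)); apply/idP/idP.
        case/existsP=> x /andP [xT /andP [axy ynS]]; rewrite ynS /=.
        by apply/existsP; exists x; rewrite inE xT axy.
      case/andP=> ynS /existsP [x /andP [xTS axy]]; apply/existsP; exists x.
      move: xTS; rewrite inE => /orP [xT|xS]; first by rewrite xT /adj' axy ynS.
      by case/negP: ynS; apply: NB_sub xS axy.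
    have sub1 : NB adj S \subset NB adj (T :|: S).
      apply/subsetP=> y; rewrite !inNB => /existsP [x /andP [xS axy]].
      by apply/existsP; exists x; rewrite inE xS orbT axy.
    rewrite eqN cardsD (setIidPr sub1).
    have dTS : #|T :|: S| = #|T| + #|S|.
      rewrite cardsU; suff -> : T :&: S = set0 by rewrite cards0 subn0.
      apply/setP=> x; rewrite !inE; apply/negP=> /andP [xT xS].
      by move: (subsetP TAS x xT); rewrite inE xS.
    have := hallA (T :|: S); rewrite subUset SA andbT.
    have -> : T \subset A by apply: subset_trans TAS (subsetDl _ _).
    by move=> /(_ isT); rewrite dTS; lia.
  exists (fun x => if x \in S then fS x else fT x); split.
    move=> x x' xA x'A /=.
    case: ifP => xS; case: ifP => x'S.
    - by apply: injS.
    - have hx' : x' \in A :\: S by rewrite inE x'S.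
      move=> e; move: (adjT _ hx'); rewrite /adj' -e => /andP [_].
      by rewrite (NB_sub xS (adjS _ xS)).
    - have hx : x \in A :\: S by rewrite inE xS.
      move=> e; move: (adjT _ hx); rewrite /adj' e => /andP [_].
      by rewrite (NB_sub x'S (adjS _ x'S)).
    - by apply: injT; rewrite inE ?xS ?x'S.
  move=> x xA; case: ifP => xS; first by apply: adjS.
  have hx : x \in A :\: S by rewrite inE xS.
  by case/andP: (adjT _ hx).
rewrite negb_exists => /forallP noT.
case: (set_0Vmem A) => [A0|[x0 x0A]].
  by exists (fun _ => y0); split=> [x|x]; rewrite A0 inE.
have : 0 < #|NB adj [set x0]|.
  by apply: leq_trans (hallA _ _); rewrite ?cards1 // sub1set.
rewrite card_gt0; case/set0Pn=> y; rewrite inNB => /existsP [z /andP [/set1P -> ax0y]]; clear z.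
pose adj' x y' := adj x y' && (y' != y).
have [fA [injA adjA]] : exists f : X -> Y, {in A :\ x0 &, injective f} /\
    forall x, x \in A :\ x0 -> adj' x (f x).
  apply: IH.
    have : #|A :\ x0| < #|A| by rewrite (cardsD1 x0 A) x0A.
    by lia.
  move=> T TA.
  case: (set_0Vmem T) => [->|[t tT]]; first by rewrite cards0.
  have TsA : T \subset A by apply: subset_trans TA (subsetDl _ _).
  have TnA : T != A.
    apply/eqP=> eTA; move: (subsetP TA x0); rewrite eTA x0A !inE eqxx /=.
    by move/(_ isT).
  have Tn0 : T != set0 by apply/set0Pn; exists t.
  move: (noT T); rewrite TsA Tn0 TnA /= -ltnNge => lt.
  have sub : NB adj T :\ y \subset NB adj' T.
    apply/subsetP=> y'; rewrite in_setD1 !inNB => /andP [ny /existsP [z /andP [xT axy]]].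
    by apply/existsP; exists z; rewrite xT /adj' axy ny.
  have := subset_leq_card sub; have := cardsD1 y (NB adj T).
  by case: (y \in NB adj T) => /=; lia.
exists (fun x => if x == x0 then y else fA x); split.
  move=> x x' xA x'A /=.
  case: eqP => [->|nx]; case: eqP => [->|nx'] //.
  - have hx' : x' \in A :\ x0 by rewrite !inE x'A andbT; apply/eqP.
    by move=> e; move: (adjA _ hx'); rewrite /adj' -e eqxx andbF.
  - have hx : x \in A :\ x0 by rewrite !inE xA andbT; apply/eqP.
    by move=> e; move: (adjA _ hx); rewrite /adj' e eqxx andbF.
  - by apply: injA; rewrite !inE ?xA ?x'A andbT; apply/eqP.
move=> x xA; case: eqP => [->//|nx].
have hx : x \in A :\ x0 by rewrite !inE xA andbT; apply/eqP.
by case/andP: (adjA _ hx).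
Qed.

End Hall.


Lemma sum_eq1 (T : finType) (a : T) : \sum_(y : T) (a == y) = 1.
Proof.
rewrite (bigD1 a) //= eqxx big1 // => y ya.
by rewrite eq_sym (negbTE ya).
Qed.

Lemma idd (X Y : finType) (D : nat) (m : X -> Y -> nat) :
  #|X| = #|Y| ->
  (forall x, \sum_y m x y = D) -> (forall y, \sum_x m x y = D) ->
  exists F : 'I_D -> X -> Y, (forall t, injective (F t)) /\
    forall x y, m x y = \sum_(t < D) (F t x == y).
Proof.
move=> cXY; elim: D m => [|D IH] m hr hc.
  exists (fun t : 'I_0 => False_rect _ (notF (ltn_ord t))).
  split; first by case.
  move=> x y; rewrite big_ord0; apply/eqP; rewrite -leqn0.
  by rewrite -(hr x) (bigD1 y) //= leq_addr.
case: (pickP (fun _ : X => true)) => [x0 _|none]; last first.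
  have Xe : X -> False by move=> x; move: (none x).
  exists (fun t x => match Xe x with end); split; first by move=> t x; case: (Xe x).
  by move=> x; case: (Xe x).
case: (pickP (fun _ : Y => true)) => [y0 _|none]; last first.
  by move: (hr x0); rewrite big_pred0.
  have hallc : forall S : {set X}, S \subset [set: X] -> #|S| <= #|NB (fun x y => 0 < m x y) S|.
    move=> S _.
    rewrite -(leq_pmul2l (ltn0Sn D)).
    have e1 : D.+1 * #|S| = \sum_(x in S) \sum_(y in NB (fun x y => 0 < m x y) S) m x y.
      rewrite mulnC -sum_nat_const; apply: eq_bigr => x xS.
      rewrite -(hr x) [RHS]big_mkcond /=; apply: eq_bigr => y _.
      case: ifP => // /negbT; rewrite inNB negb_exists => /forallP/(_ x).
      by rewrite xS /= lt0n negbK => /eqP.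
    rewrite e1 exchange_big /= mulnC -sum_nat_const.
    apply: leq_sum => y _; rewrite -(hc y).
    by rewrite [X in _ <= X](bigID (mem S)) /= leq_addr.
  have [f [injf adjf]] := hall y0 hallc.
  have {}injf : injective f by move=> x x'; apply: injf; rewrite inE.
  have bijf : bijective f.
    by apply: inj_card_bij => //; exact: (eq_leq (esym cXY)).
  case: bijf => g fK gK.
  pose m' x y := m x y - (f x == y).
  have [F' [injF' hF']] : exists F : 'I_D -> X -> Y, (forall t, injective (F t)) /\
      forall x y, m' x y = \sum_(t < D) (F t x == y).
    apply: IH => [x|y].
      rewrite /m' sumnB; first by move: (hr x) (sum_eq1 (f x)) => h1 h2; lia.
      move=> y _; case: eqP => [<-|//]; exact: adjf (in_setT x).
    rewrite /m' sumnB; last first.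
      move=> x _; case: eqP => [<-|//]; exact: adjf (in_setT x).
    have e : \sum_x (f x == y) = \sum_x (g y == x).
      apply: eq_bigr => x _; congr (nat_of_bool _).
      by apply/eqP/eqP=> [<-|<-]; [rewrite fK|rewrite gK].
    by move: (hc y) e (sum_eq1 (g y)) => h1 h2 h3; lia.
  exists (fun t => if insub (val t) is Some t' then F' t' else f); split.
    by move=> t; case: insub.
  move=> x y; rewrite big_ord_recr /=.
  rewrite insubN ?ltnn //.
  have e : \sum_(i < D) ((if insub (val (widen_ord (leqnSn D) i)) is Some t' then F' t' else f) x == y)
     = \sum_(t < D) (F' t x == y).
    apply: eq_bigr => t _; rewrite /= insubT /= => [|h]; first exact: ltn_ord. by congr (nat_of_bool (F' _ x == y)); exact: val_inj.
  rewrite e -hF' /m' subnK //; case: eqP => [<-|//]; exact: adjf (in_setT x).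
Qed.


Lemma sum_eqm (T : finType) (a : T) (c : T -> nat) : \sum_(y : T) (a == y) * c y = c a.
Proof.
rewrite (bigD1 a) //= eqxx big1 ?mul1n ?addn0 // => y ya.
by rewrite eq_sym (negbTE ya).
Qed.

Lemma kec (X Y : finType) (D : nat) (m : X -> Y -> nat) :
  (forall x, \sum_y m x y <= D) -> (forall y, \sum_x m x y <= D) ->
  exists G : 'I_D -> X -> option Y,
    (forall t x x' y, G t x = Some y -> G t x' = Some y -> x = x') /\
    forall x y, m x y = \sum_(t < D) (G t x == Some y).
Proof.
move=> hr hc.
pose M (u : X + Y) (v : Y + X) : nat :=
  match u, v with
  | inl x, inl y => m x y
  | inl x, inr x' => (x == x') * (D - \sum_y m x y)
  | inr y', inl y => (y' == y) * (D - \sum_x m x y)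
  | inr y, inr x => m x y
  end.
have [F [injF hF]] : exists F : 'I_D -> X + Y -> Y + X, (forall t, injective (F t)) /\
    forall u v, M u v = \sum_(t < D) (F t u == v).
  apply: idd.
  - by rewrite !card_sum addnC.
  - case=> [x|y]; rewrite big_sumType /=.
      by rewrite sum_eqm; move: (hr x); lia.
    by rewrite sum_eqm; move: (hc y); lia.
  - case=> [y|x]; rewrite big_sumType /=.
      rewrite (eq_bigr (fun y0 => (y == y0) * (D - \sum_x m x y))).
        by rewrite sum_eqm; move: (hc y); lia.
      by move=> y0 _; rewrite eq_sym.
    rewrite (eq_bigr (fun y0 => (x == y0) * (D - \sum_y m y0 y))).
      by rewrite sum_eqm; move: (hr x); lia.
    by move=> y0 _; rewrite eq_sym.
exists (fun t x => if F t (inl x) is inl y then Some y else None); split.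
  move=> t x x' y; case e: (F t (inl x)) => [y1|] // [<-].
  case e': (F t (inl x')) => [y2|] // [e2]; rewrite e2 in e'.
  by move: (injF t (inl x) (inl x')); rewrite e e' => /(_ erefl) [].
move=> x y; rewrite -[m x y]/(M (inl x) (inl y)) hF.
apply: eq_bigr => t _; congr (nat_of_bool _).
by case: (F t (inl x)).
Qed.


Lemma greedy (K : finType) (f : K -> nat) (a : nat) : a <= \sum_l f l ->
  exists g : K -> nat, (forall l, g l <= f l) /\ \sum_l g l = a.
Proof.
elim: a => [|a IH] h.
  by exists (fun _ => 0); split=> // ; rewrite big1.
have [g [gf sg]] := IH (ltnW h).
have [l gl] : exists l, g l < f l.
  apply/existsP; case: (boolP [exists l, g l < f l]) => // /negP H; exfalso.
  have {}H : forall l, ~~ (g l < f l) by move=> l; apply/negP=> hl; apply: H; apply/existsP; exists l.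
  have : \sum_l f l <= \sum_l g l by apply: leq_sum => l _; rewrite leqNgt H.
  by rewrite sg; lia.
exists (fun l' => g l' + (l' == l)); split.
  by move=> l'; case: eqP => [->|_]; rewrite ?addn1 ?addn0.
rewrite big_split /= sg (bigD1 l) //= eqxx big1 //; first by lia.
by move=> l' /negbTE ->.
Qed.

Lemma distrib (K : finType) (b a : nat) (f : K -> nat) : \sum_l f l = b * a ->
  exists mu : 'I_b -> K -> nat,
    (forall t, \sum_l mu t l = a) /\ (forall l, \sum_(t < b) mu t l = f l).
Proof.
elim: b f => [|b IH] f hf.
  exists (fun t : 'I_0 => False_rect _ (notF (ltn_ord t))); split; first by case.
  move=> l; rewrite big_ord0; apply/esym/eqP; rewrite -leqn0.
  by move: hf; rewrite (bigD1 l) //= mul0n => e; rewrite -e leq_addr.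
have ha : a <= \sum_l f l by rewrite hf mulSn leq_addr.
have [g [gf sg]] := greedy ha.
have hb : \sum_l (f l - g l) = b * a by rewrite sumnB // hf sg mulSn; lia.
have [mu [h1 h2]] := IH (fun l => f l - g l) hb.
exists (fun t => if insub (val t) is Some t' then mu t' else g); split.
  by move=> t; case: insubP => [t' _ _|_]; [apply: h1|].
move=> l; rewrite big_ord_recr /= insubN ?ltnn //.
have e : \sum_(i < b) (if insub (val (widen_ord (leqnSn b) i)) is Some t' then mu t' else g) l
     = \sum_(t < b) mu t l.
  apply: eq_bigr => t _; rewrite /= insubT /= => [|h]; first exact: ltn_ord.
  by congr (mu _ l); exact: val_inj.
by rewrite e h2; move: (gf l); lia.
Qed.


Section Blk.
Variables (n m : nat) (h : m <= n).
Definition toB (i : 'I_n) : 'I_m + 'I_(n - m) := split (cast_ord (esym (subnKC h)) i).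
Definition fromB (u : 'I_m + 'I_(n - m)) : 'I_n := cast_ord (subnKC h) (unsplit u).
Lemma toBK : cancel toB fromB.
Proof. by move=> i; rewrite /toB /fromB splitK; apply: val_inj. Qed.
Lemma fromBK : cancel fromB toB.
Proof.
move=> u; rewrite /toB /fromB.
have -> : cast_ord (esym (subnKC h)) (cast_ord (subnKC h) (unsplit u)) = unsplit u.
  by apply: val_inj.
by rewrite unsplitK.
Qed.
Lemma toB_widen (i : 'I_m) : toB (widen_ord h i) = inl i.
Proof.
have -> : widen_ord h i = fromB (inl i) by apply: val_inj.
by rewrite fromBK.
Qed.
Lemma sum_toB (F : 'I_n -> nat) : \sum_i F i = \sum_u F (fromB u).
Proof.
rewrite (reindex fromB) //; exists toB => x _; [exact: fromBK|exact: toBK].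
Qed.
End Blk.

Lemma cardsum (T : finType) (P : pred T) : #|[set x | P x]| = \sum_x P x.
Proof.
rewrite -sum1_card big_mkcond /=; apply: eq_bigr => x _; rewrite inE.
by case: (P x).
Qed.

Section Mat.
Variables (k n r s : nat) (hr : r <= n) (hs : s <= n).
Variable F : 'I_r + 'I_(n - r) -> 'I_s + 'I_(n - s) -> 'I_k.
Definition blkM : 'M['I_k]_n := \matrix_(i, j) F (toB hr i) (toB hs j).

Lemma occ_blk (l : 'I_k) : occ blkM l = \sum_u \sum_v (F u v == l).
Proof.
rewrite /occ cardsum -(pair_bigA _ (fun i j => (blkM i j == l) : nat)) /=.
rewrite (sum_toB hr); apply: eq_bigr => u _; rewrite (sum_toB hs); apply: eq_bigr => v _.
by rewrite mxE !fromBK.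
Qed.

Lemma latin_blk : (forall u, injective (F u)) -> (forall v, injective (fun u => F u v)) ->
  latin_array blkM.
Proof.
move=> h1 h2; split.
  move=> i j j'; rewrite !mxE => /h1 e.
  by rewrite -(toBK hs j) e toBK.
move=> j i i'; rewrite !mxE => /(h2 (toB hs j)) e.
by rewrite -(toBK hr i) e toBK.
Qed.

Lemma blk_widen (i : 'I_r) (j : 'I_s) : blkM (widen_ord hr i) (widen_ord hs j) = F (inl i) (inl j).
Proof. by rewrite mxE !toB_widen. Qed.
End Mat.


Lemma inj_sum1 (I : finType) (K : eqType) (g : I -> K) (l : K) : injective g ->
  \sum_c (g c == l) = [exists c, g c == l].
Proof.
move=> ig; case: existsP => [[c /eqP gc]|none].
  rewrite (bigD1 c) //= gc eqxx big1 // => c' nc'; apply/eqP; rewrite eqb0.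
  by apply/eqP=> e; move: nc'; rewrite -gc in e; rewrite (ig _ _ e) eqxx.
by rewrite big1 // => c _; apply/eqP; rewrite eqb0; apply/negP=> e; apply: none; exists c.
Qed.

Lemma inj_sum_le1 (I : finType) (K : eqType) (g : I -> K) (l : K) : injective g ->
  \sum_c (g c == l) <= 1.
Proof. by move=> ig; rewrite inj_sum1 //; case: existsP. Qed.

Lemma only_if (k n r s : nat) (hr : r <= n) (hs : s <= n) (rho : 'I_k -> nat)
  (L : 'M['I_k]_(r, s)) (M : 'M['I_k]_n) (hM : rho_latin_square rho M)
  (hML : forall i j, M (widen_ord hr i) (widen_ord hs j) = L i j) :
  exists (ThR : {set 'I_r * 'I_k}) (ThC : {set 'I_s * 'I_k}),
    subgraph_of_Gamma L ThR ThC /\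
    [/\ (forall i, degR ThR i = n - s), (forall j, degC ThC j = n - r),
        (forall l, edgesR ThR l + edgesC ThC l + occ L l <= rho l),
        (forall l, rho l + r <= occ L l + edgesR ThR l + n) &
        (forall l, rho l + s <= occ L l + edgesC ThC l + n)].
Proof.
case: hM => [[rowI colI] hocc].
pose F u v := M (fromB hr u) (fromB hs v).
have eM : M = blkM hr hs F.
  by apply/matrixP=> i j; rewrite mxE /F !toBK.
have FL : forall i j, F (inl i) (inl j) = L i j.
  move=> i j; rewrite /F -hML; congr (M _ _); apply: val_inj => //.
have rI : forall u, injective (F u).
  by move=> u v v' /rowI /(can_inj (fromBK hs)).
have cI : forall v, injective (fun u => F u v).
  by move=> v u u' /colI /(can_inj (fromBK hr)).
pose ThR := [set p : 'I_r * 'I_k | [exists c : 'I_(n - s), F (inl p.1) (inr c) == p.2]].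
pose ThC := [set p : 'I_s * 'I_k | [exists t : 'I_(n - r), F (inr t) (inl p.1) == p.2]].
pose TR l := \sum_i \sum_c (F (inl i) (inr c) == l).
pose BL l := \sum_j \sum_t (F (inr t) (inl j) == l).
pose TL l := \sum_i \sum_j (F (inl i) (inl j) == l).
pose BR l := \sum_t \sum_c (F (inr t) (inr c) == l).
have hTL : forall l, TL l = occ L l.
  move=> l; rewrite /occ cardsum -(pair_bigA _ (fun i j => (L i j == l) : nat)).
  by apply: eq_bigr => i _; apply: eq_bigr => j _; rewrite FL.
have hR : forall l, edgesR ThR l = TR l.
  move=> l; rewrite /edgesR cardsum; apply: eq_bigr => i _.
  rewrite inE /= inj_sum1 //; move=> c c' /rI []; done.
have hC : forall l, edgesC ThC l = BL l.
  move=> l; rewrite /edgesC cardsum; apply: eq_bigr => j _.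
  rewrite inE /= inj_sum1 //; move=> t t' /(cI (inl j)) []; done.
have hsum : forall l, rho l = TL l + TR l + BL l + BR l.
  move=> l; rewrite -hocc eM occ_blk big_sumType /=.
  rewrite (eq_bigr (fun i => \sum_j (F (inl i) (inl j) == l) + \sum_c (F (inl i) (inr c) == l)));
    last by move=> i _; rewrite big_sumType.
  rewrite [X in _ + X](eq_bigr (fun t => \sum_j (F (inr t) (inl j) == l) + \sum_c (F (inr t) (inr c) == l)));
    last by move=> i _; rewrite big_sumType.
  rewrite !big_split /= /TL /TR /BL /BR [X in _ = _ + X + _]exchange_big /=; lia.
have hbot : forall l, BL l + BR l <= n - r.
  move=> l; rewrite /BL exchange_big /= /BR -big_split /=.
  apply: (@leq_trans (\sum_(t < n - r) 1)); last by rewrite sum1_card card_ord.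
  apply: leq_sum => t _.
  have := inj_sum_le1 l (rI (inr t)); rewrite big_sumType //.
have hright : forall l, TR l + BR l <= n - s.
  move=> l; rewrite /TR /BR [X in X + _]exchange_big [X in _ + X]exchange_big -big_split /=.
  apply: (@leq_trans (\sum_(c < n - s) 1)); last by rewrite sum1_card card_ord.
  apply: leq_sum => c _.
  have := inj_sum_le1 l (cI (inr c)); rewrite big_sumType //.
exists ThR, ThC; split.
  split.
    move=> i l; rewrite inE /= => /existsP [c /eqP e]; apply/forallP=> j.
    by apply/eqP=> e'; rewrite -FL -e in e'; move/rI: e'.
  move=> j l; rewrite inE /= => /existsP [t /eqP e]; apply/forallP=> i.
  by apply/eqP=> e'; rewrite -FL -e in e'; move/(cI (inl j)): e'.
split.
- move=> i; rewrite /degR.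
  have -> : [set l | (i, l) \in ThR] = [set F (inl i) (inr c) | c : 'I_(n - s)].
    apply/setP=> l; rewrite !inE; apply/existsP/imsetP => [[c /eqP /= <-]|[c _ ->]].
      by exists c.
    by exists c.
  rewrite card_imset ?card_ord //; move=> c c' /rI []; done.
- move=> j; rewrite /degC.
  have -> : [set l | (j, l) \in ThC] = [set F (inr t) (inl j) | t : 'I_(n - r)].
    apply/setP=> l; rewrite !inE; apply/existsP/imsetP => [[t /eqP /= <-]|[t _ ->]].
      by exists t.
    by exists t.
  rewrite card_imset ?card_ord //; move=> t t' /(cI (inl j)) []; done.
- by move=> l; rewrite hR hC -hTL hsum; lia.
- by move=> l; rewrite hR -hTL hsum; move: (hbot l) (subnKC hr); lia.
- by move=> l; rewrite hC -hTL hsum; move: (hright l) (subnKC hs); lia.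
Qed.


Lemma sum_some (Y : finType) (o : option Y) : \sum_y (o == Some y) = (o != None).
Proof.
case: o => [y0|] /=; last by rewrite big1.
rewrite -(sum_eq1 y0); apply: eq_bigr => y _; done.
Qed.

Lemma card_sum_in (T : finType) (A : {set T}) : #|A| = \sum_x (x \in A).
Proof.
rewrite -cardsum; apply: eq_card => x; by rewrite inE.
Qed.

Section Col.
Variables (X Y : finType) (D : nat) (G : 'I_D -> X -> option Y) (m : X -> Y -> nat).
Hypothesis hm : forall x y, m x y = \sum_(t < D) (G t x == Some y).

Lemma allSome x : \sum_y m x y = D -> forall t, G t x != None.
Proof.
move=> hx t0; apply/negP=> /eqP e.
have : \sum_y m x y = \sum_(t < D) (G t x != None).
  rewrite (eq_bigr _ (fun y _ => hm x y)) exchange_big /=.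
  by apply: eq_bigr => t _; rewrite sum_some.
rewrite hx (bigD1 t0) //= e /=.
have : \sum_(t < D | t != t0) (G t x != None) <= \sum_(t < D | t != t0) 1.
  by apply: leq_sum => t _; case: (_ != _).
rewrite sum1_card cardC1 card_ord => h1 h2; have h0 := ltn_ord t0; rewrite add0n in h2; rewrite -h2 in h1 h0.
have L1 : forall z, 0 < z -> z <= z.-1 -> False by case=> // z _ /=; rewrite ltnn.
exact: L1 _ (leq_ltn_trans (leq0n _) h0) h1.
Qed.

Lemma hit_pos t x y : G t x = Some y -> 0 < m x y.
Proof. by move=> e; rewrite hm (bigD1 t) //= e eqxx. Qed.

Lemma col_uniq x y t t' : m x y <= 1 -> G t x = Some y -> G t' x = Some y -> t = t'.
Proof.
move=> h1 e e'; apply/eqP; apply/negPn/negP=> ne.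
move: h1; rewrite hm (bigD1 t) //= (bigD1 t') //=; last by rewrite eq_sym.
rewrite e e' eqxx /=; lia.
Qed.
End Col.

Lemma if_dir (k n r s : nat) (hr : r <= n) (hs : s <= n) (rho : 'I_k -> nat)
  (L : 'M['I_k]_(r, s)) (hLat : latin_array L) (hk : 0 < k)
  (hsum : \sum_(l < k) rho l = n ^ 2)
  (ThR : {set 'I_r * 'I_k}) (ThC : {set 'I_s * 'I_k})
  (hsub : subgraph_of_Gamma L ThR ThC)
  (hdR : forall i, degR ThR i = n - s) (hdC : forall j, degC ThC j = n - r)
  (h3 : forall l, edgesR ThR l + edgesC ThC l + occ L l <= rho l)
  (h4 : forall l, rho l + r <= occ L l + edgesR ThR l + n)
  (h5 : forall l, rho l + s <= occ L l + edgesC ThC l + n) :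
  exists M : 'M['I_k]_n, rho_latin_square rho M /\
    forall (i : 'I_r) (j : 'I_s), M (widen_ord hr i) (widen_ord hs j) = L i j.
Proof.
pose l0 : 'I_k := Ordinal hk.
have eR : forall l, edgesR ThR l = \sum_i ((i, l) \in ThR) by move=> l; rewrite /edgesR cardsum.
have eC : forall l, edgesC ThC l = \sum_j ((j, l) \in ThC) by move=> l; rewrite /edgesC cardsum.
have dR : forall i, \sum_l ((i, l) \in ThR) = n - s by move=> i; rewrite -(hdR i) /degR cardsum.
have dC : forall j, \sum_l ((j, l) \in ThC) = n - r by move=> j; rewrite -(hdC j) /degC cardsum.
have eO : forall l, occ L l = \sum_i \sum_j (L i j == l).
  by move=> l; rewrite /occ cardsum -(pair_bigA _ (fun i j => (L i j == l) : nat)).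
pose f l := rho l - occ L l - edgesR ThR l - edgesC ThC l.
have hf : forall l, f l + occ L l + edgesR ThR l + edgesC ThC l = rho l.
  by move=> l; move: (h3 l); rewrite /f; lia.
have sO : \sum_l occ L l = r * s.
  rewrite (eq_bigr _ (fun l _ => eO l)) exchange_big /=.
  rewrite (eq_bigr (fun _ => s)) ?sum_nat_const ?card_ord //.
  move=> i _; rewrite exchange_big /= (eq_bigr (fun _ => 1)) ?sum_nat_const ?card_ord ?muln1 //.
  by move=> j _; rewrite sum_eq1.
have sR : \sum_l edgesR ThR l = r * (n - s).
  rewrite (eq_bigr _ (fun l _ => eR l)) exchange_big /=.
  by rewrite (eq_bigr (fun _ => n - s)) ?sum_nat_const ?card_ord // => i _; rewrite dR.
have sC : \sum_l edgesC ThC l = s * (n - r).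
  rewrite (eq_bigr _ (fun l _ => eC l)) exchange_big /=.
  by rewrite (eq_bigr (fun _ => n - r)) ?sum_nat_const ?card_ord // => j _; rewrite dC.
have sf : \sum_l f l = (n - r) * (n - s).
  have : \sum_l rho l = \sum_l f l + \sum_l occ L l + \sum_l edgesR ThR l + \sum_l edgesC ThC l.
    by rewrite -!big_split; apply: eq_bigr => l _; rewrite /= hf.
  rewrite hsum sO sR sC.
  move: (subnKC hr) (subnKC hs); move: (n - r) (n - s) => b a e1 e2.
  move=> E; have E2 : n ^ 2 = (r + b) * (s + a) by rewrite e1 e2 mulnn.
  rewrite E2 in E; nia.
have [mu [mu1 mu2]] := distrib sf.
pose m1 (u : 'I_r + 'I_(n - r)) (l : 'I_k) : nat :=
  match u with inl i => ((i, l) \in ThR) | inr t => mu t l end.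
have [G1 [G1i G1m]] : exists G : 'I_(n - s) -> 'I_r + 'I_(n - r) -> option 'I_k,
    (forall t x x' y, G t x = Some y -> G t x' = Some y -> x = x') /\
    forall x y, m1 x y = \sum_(t < n - s) (G t x == Some y).
  apply: kec.
    by case=> [i|t] /=; rewrite ?dR ?mu1.
  move=> l; rewrite big_sumType /= -eR mu2.
  by move: (h5 l) (h3 l) (hf l) (subnKC hs); lia.
have G1S : forall c u, G1 c u != None.
  move=> c u; apply: (allSome G1m).
  by case: u => [i|t] /=; rewrite ?dR ?mu1.
pose sym1 c u := odflt l0 (G1 c u).
have G1sym : forall c u, G1 c u = Some (sym1 c u).
  by move=> c u; move: (G1S c u); rewrite /sym1; case: (G1 c u).
pose MC c := [set l | [exists t, G1 c (inr t) == Some l]].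
have G1inj : forall c u u', sym1 c u = sym1 c u' -> u = u'.
  by move=> c u u' e; apply: (G1i c _ _ (sym1 c u)); rewrite G1sym ?e.
have cardMC : forall c, #|MC c| = n - r.
  move=> c.
  have -> : MC c = [set sym1 c (inr t) | t : 'I_(n - r)].
    apply/setP=> l; rewrite !inE; apply/existsP/imsetP => [[t /eqP e]|[t _ ->]].
      by exists t => //; move: e; rewrite G1sym => -[].
    by exists t; rewrite G1sym.
  by rewrite card_imset ?card_ord // => t t' /G1inj [].
pose m2 (v : 'I_s + 'I_(n - s)) (l : 'I_k) : nat :=
  match v with inl j => ((j, l) \in ThC) | inr c => (l \in MC c) end.
have colMC : forall l, \sum_c (l \in MC c) = f l.
  move=> l; rewrite -mu2.
  have -> : \sum_c (l \in MC c) = \sum_(c < n - s) \sum_(t < n - r) (G1 c (inr t) == Some l).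
    apply: eq_bigr => c _; rewrite inE inj_sum1 //.
    by move=> t t'; rewrite !G1sym => -[] /G1inj [].
  rewrite exchange_big /=; apply: eq_bigr => t _.
  by rewrite -[mu t l]/(m1 (inr t) l) G1m.
have [G2 [G2i G2m]] : exists G : 'I_(n - r) -> 'I_s + 'I_(n - s) -> option 'I_k,
    (forall t x x' y, G t x = Some y -> G t x' = Some y -> x = x') /\
    forall x y, m2 x y = \sum_(t < n - r) (G t x == Some y).
  apply: kec.
    case=> [j|c] /=; first by rewrite dC.
    by rewrite -(cardMC c) card_sum_in.
  move=> l; rewrite big_sumType /= -eC colMC.
  by move: (h4 l) (h3 l) (hf l) (subnKC hr); lia.
have G2S : forall t v, G2 t v != None.
  move=> t v; apply: (allSome G2m).
  by case: v => [j|c] /=; rewrite ?dC // -(cardMC c) card_sum_in.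
pose sym2 t v := odflt l0 (G2 t v).
have G2sym : forall t v, G2 t v = Some (sym2 t v).
  by move=> t v; move: (G2S t v); rewrite /sym2; case: (G2 t v).
have G2inj : forall t v v', sym2 t v = sym2 t v' -> v = v'.
  by move=> t v v' e; apply: (G2i t _ _ (sym2 t v)); rewrite G2sym ?e.
pose F (u : 'I_r + 'I_(n - r)) (v : 'I_s + 'I_(n - s)) : 'I_k :=
  match u with
  | inl i => match v with inl j => L i j | inr c => sym1 c (inl i) end
  | inr t => sym2 t v
  end.
have symE1 : forall c u l, (sym1 c u == l) = (G1 c u == Some l).
  by move=> c u l; rewrite G1sym.
have symE2 : forall t v l, (sym2 t v == l) = (G2 t v == Some l).
  by move=> t v l; rewrite G2sym.
have LR : forall i j c, L i j != sym1 c (inl i).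
  move=> i j c; apply/eqP=> e.
  have := hit_pos G1m (G1sym c (inl i)); rewrite /= -e lt0b => /(hsub.1).
  by move/forallP/(_ j); rewrite eqxx.
have LC : forall i j t, L i j != sym2 t (inl j).
  move=> i j t; apply/eqP=> e.
  have := hit_pos G2m (G2sym t (inl j)); rewrite /= -e lt0b => /(hsub.2).
  by move/forallP/(_ i); rewrite eqxx.
exists (blkM hr hs F); split; last by move=> i j; rewrite blk_widen.
split.
  apply: latin_blk.
    case=> [i|t]; last by move=> v v' /G2inj.
    case=> [j|c] [j'|c'] /=.
    - by move/(hLat.1 i) => ->.
    - by move=> e; move: (LR i j c'); rewrite e eqxx.
    - by move=> e; move: (LR i j' c); rewrite e eqxx.
    - move=> e; congr inr; apply: (col_uniq G1m (x := inl i) (y := sym1 c (inl i))).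
      + by rewrite /=; case: (_ \in _).
      + exact: G1sym.
      + by rewrite e; exact: G1sym.
  case=> [j|c] [i|t] [i'|t'] /=.
  - by move/(hLat.2 j) => ->.
  - by move=> e; move: (LC i j t'); rewrite e eqxx.
  - by move=> e; move: (LC i' j t); rewrite e eqxx.
  - move=> e; congr inr; apply: (col_uniq G2m (x := inl j) (y := sym2 t (inl j))).
    + by rewrite /=; case: (_ \in _).
    + exact: G2sym.
    + by rewrite e; exact: G2sym.
  - by move/G1inj.
  - move=> e; exfalso.
    have := hit_pos G2m (G2sym t' (inr c)); rewrite /= -e lt0b inE.
    case/existsP=> t0 /eqP e0; move: (G1i _ _ _ _ e0 (G1sym c (inl i))); done.
  - move=> e; exfalso.
    have := hit_pos G2m (G2sym t (inr c)); rewrite /= e lt0b inE.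
    case/existsP=> t0 /eqP e0; move: (G1i _ _ _ _ e0 (G1sym c (inl i'))); done.
  - move=> e; congr inr; apply: (col_uniq G2m (x := inr c) (y := sym2 t (inr c))).
    + by rewrite /=; case: (_ \in _).
    + exact: G2sym.
    + by rewrite e; exact: G2sym.
move=> l; rewrite occ_blk big_sumType /= -(hf l).
have top : \sum_i \sum_v (F (inl i) v == l) = occ L l + edgesR ThR l.
  rewrite eO eR -big_split /=; apply: eq_bigr => i _.
  rewrite big_sumType /=; congr (_ + _).
  rewrite -[((i, l) \in ThR) : nat]/(m1 (inl i) l) G1m.
  by apply: eq_bigr => c _; rewrite symE1.
have bot : \sum_t \sum_v (F (inr t) v == l) = edgesC ThC l + f l.
  rewrite exchange_big /= big_sumType /= eC -colMC; congr (_ + _).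
    apply: eq_bigr => j _; rewrite -[((j, l) \in ThC) : nat]/(m2 (inl j) l) G2m.
    by apply: eq_bigr => t _; rewrite symE2.
  apply: eq_bigr => c _; rewrite -[((l \in MC c)) : nat]/(m2 (inr c) l) G2m.
  by apply: eq_bigr => t _; rewrite symE2.
rewrite top bot; lia.
Qed.

End Aux.
Import Aux.

Local Open Scope ring_scope.

Theorem mainTheorem3 (n k : nat) (rho : 'I_k -> nat)
    (hrho1 : forall l : 'I_k, (1 <= rho l <= n)%N)
    (hnk : (n <= k)%N)
    (hsum : (\sum_(l < k) rho l)%N = (n ^ 2)%N)
    (r s : nat) (hr : (r <= n)%N) (hs : (s <= n)%N)
    (hmin : (minn r s < n)%N)
    (L : 'M['I_k]_(r, s)) (hL : rho_latin_rectangle rho L) :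
  completable rho hr hs L <->
  exists (ThR : {set 'I_r * 'I_k}) (ThC : {set 'I_s * 'I_k}),
    subgraph_of_Gamma L ThR ThC /\
    [/\
        (forall i : 'I_r, degR ThR i = (n - s)%N),
        (forall j : 'I_s, degC ThC j = (n - r)%N),
        (forall l : 'I_k,
           ((edgesR ThR l + edgesC ThC l)%:Z <= (rho l)%:Z - (occ L l)%:Z)),
        (forall l : 'I_k,
           ((rho l)%:Z - (occ L l)%:Z - n%:Z + r%:Z <= (edgesR ThR l)%:Z)) &
        (forall l : 'I_k,
           ((rho l)%:Z - (occ L l)%:Z - n%:Z + s%:Z <= (edgesC ThC l)%:Z))].
Proof.
split.
  case=> M [hM hML].
  have [ThR [ThC [sub [d1 d2 e3 e4 e5]]]] := only_if hM hML.
  exists ThR, ThC; split => //; split => // l.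
  - by move: (e3 l); lia.
  - by move: (e4 l); lia.
  - by move: (e5 l); lia.
case=> ThR [ThC [sub [d1 d2 e3 e4 e5]]].
have hk : (0 < k)%N by move: hmin hnk; rewrite /minn; case: ifP; lia.
have e3' : forall l, (edgesR ThR l + edgesC ThC l + occ L l <= rho l)%N.
  by move=> l; move: (e3 l); lia.
have e4' : forall l, (rho l + r <= occ L l + edgesR ThR l + n)%N.
  by move=> l; move: (e4 l); lia.
have e5' : forall l, (rho l + s <= occ L l + edgesC ThC l + n)%N.
  by move=> l; move: (e5 l); lia.
exact: (if_dir hr hs hL.1 hk hsum sub d1 d2 e3' e4' e5').
Qed.
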